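(* Let $G$ and $H$ be word-representable graphs, with $H$ rooted at some vertex. Then $l(G \circ H) \le |H|\,l(G) + |G|\,l(H) + (|H|-1)\kappa_G$, where $\kappa_G$ is the size of a maximum clique of $G$.
   Context: All graphs are simple and undirected; $|G|$ denotes the number of vertices of $G$. Letters $x,y$ alternate in a word $w$ if deleting all other letters from $w$ yields $xyxy\ldots$ or $yxyx\ldots$ (of either parity). A word $w$ over $V(G)$ represents $G$ if every vertex occurs in $w$ and for all distinct $x,y$, $xy\in E(G)$ iff $x,y$ alternate in $w$; $G$ is word-representable if such a word exists, and $l(G)$ is the minimum length of a word representing $G$. For a graph $G$ and a rooted graph $H$, the rooted product $G\circ H$ is obtained by taking $|V(G)|$ disjoint copies of $H$, one for each vertex $v$ of $G$, and identifying each vertex $v$ of $G$ with the root of its copy of $H$. *)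

(* Defs.v *)
From Stdlib Require Import ClassicalEpsilon.
From mathcomp Require Import all_boot.
Set Implicit Arguments. Unset Strict Implicit. Unset Printing Implicit Defensive.

Definition simple_graph (T : finType) (e : rel T) : Prop :=
  symmetric e /\ irreflexive e.

(* x and y alternate in w: deleting all other letters yields an alternating word,
   i.e. no two consecutive letters of the restriction are equal. *)
Definition alternate (T : eqType) (w : seq T) (x y : T) : bool :=
  sorted (fun a b => a != b) (filter (fun z => (z == x) || (z == y)) w).

Definition represents (T : finType) (e : rel T) (w : seq T) : bool :=
  [forall x, x \in w] &&
  [forall x, forall y, (x != y) ==> (e x y == alternate w x y)].

Definition word_representable (T : finType) (e : rel T) : Prop :=
  exists w : seq T, represents e w.

Definition repr_of_length (T : finType) (e : rel T) (n : nat) : bool :=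
  [exists t : n.-tuple T, represents e t].

(* l(G): the minimum length of a word representing G (0 if G is not
   word-representable; only used for word-representable graphs). *)
Definition wr_length (T : finType) (e : rel T) : nat :=
  match excluded_middle_informative (exists n, repr_of_length e n) with
  | left H => ex_minn H
  | right _ => 0
  end.

Definition is_clique (T : finType) (e : rel T) (A : {set T}) : bool :=
  [forall x in A, forall y in A, (x != y) ==> e x y].

Definition clique_number (T : finType) (e : rel T) : nat :=
  \max_(A : {set T} | is_clique e A) #|A|.

(* Rooted product G o H: vertex (v, u) is the copy of u in the copy of H
   attached at v; vertex v of G is identified with (v, r). *)
Definition rooted_product (T U : finType) (eG : rel T) (eH : rel U) (r : U)
  : rel (T * U) :=
  fun p q =>
    ((p.1 == q.1) && eH p.2 q.2) ||
    [&& p.2 == r, q.2 == r & eG p.1 q.1].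

(* Main.v *)
Require Import Defs.
From Stdlib Require Import ClassicalEpsilon.
From mathcomp Require Import all_boot zify.
Set Implicit Arguments. Unset Strict Implicit. Unset Printing Implicit Defensive.


Section Gen.
Variable T : eqType.

Lemma alt_sym (w : seq T) x y : alternate w x y = alternate w y x.
Proof. by rewrite /alternate; congr sorted; apply: eq_filter => z; rewrite orbC. Qed.

Lemma sorted_catL (s1 s2 : seq T) :
  sorted (fun a b => a != b) (s1 ++ s2) -> sorted (fun a b => a != b) s1.
Proof. by case: s1 => //= h t; rewrite cat_path => /andP[]. Qed.

Lemma sorted_dup (s1 s2 : seq T) z :
  sorted (fun a b => a != b) (s1 ++ z :: z :: s2) = false.
Proof.
case: s1 => [|h t] /=; first by rewrite eqxx.
by rewrite cat_path /= eqxx /= !andbF.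
Qed.

Lemma undup_last (x0 : T) s : s != [::] -> last x0 (undup s) = last x0 s.
Proof.
elim: s => // h s IH _.
case: s IH => [|h' s'] IH; first by [].
have IH' := IH isT; move: IH'; rewrite [last x0 (h' :: s')]/= => IH'.
have -> : undup (h :: h' :: s') = if h \in h' :: s' then undup (h' :: s')
   else h :: undup (h' :: s') by [].
rewrite [last x0 (h :: _)]/=.
case: ifP => _; first by rewrite IH'.
move: IH'; have : undup (h' :: s') != [::] by apply/eqP => E; have := mem_undup (h' :: s') h'; rewrite E mem_head.
case: (undup (h' :: s')) => // z zs _ /= ->; by [].
Qed.

Lemma undup_two (F : seq T) x y : x != y -> x \in F -> y \in F ->
  all (fun z => (z == x) || (z == y)) F ->
  exists o, undup F = [:: o; last x F] /\ o != last x F.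
Proof.
move=> nxy xF yF allF.
have Fn : F != [::] by apply/eqP => E; rewrite E in xF.
have pe : perm_eq (undup F) [:: x; y].
  apply: uniq_perm; first exact: undup_uniq.
    by rewrite /= inE nxy.
  move=> z; rewrite mem_undup !inE; apply/idP/idP.
    by move/(allP allF).
  by case/orP=> /eqP->.
have sz := perm_size pe.
case E: (undup F) sz => [|o [|l [|]]] //= _.
exists o.
have U := undup_uniq F; rewrite E /= inE andbT in U.
have := undup_last x Fn; rewrite E /= => <-.
by split.
Qed.

Lemma undup_catl (s1 s2 : seq T) : {subset s1 <= s2} -> undup (s1 ++ s2) = undup s2.
Proof.
elim: s1 => //= h s IH sub.
rewrite mem_cat (sub h (mem_head _ _)) orbT IH // => z zs.
by apply: sub; rewrite inE zs orbT.
Qed.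

Lemma flatten_nseqS (s : seq T) k : flatten (nseq k.+1 s) = flatten (nseq k s) ++ s.
Proof.
elim: k => [|k IH]; first by rewrite /= cats0.
change (s ++ flatten (nseq k.+1 s) = flatten (nseq k.+1 s) ++ s).
rewrite IH catA; congr (_ ++ _).
by rewrite -IH.
Qed.

Lemma flatten_nseq_swap (p q : seq T) n :
  flatten (nseq n.+1 (p ++ q)) = p ++ flatten (nseq n (q ++ p)) ++ q.
Proof.
elim: n => [|n IH]; first by rewrite /= !cats0.
change ((p ++ q) ++ flatten (nseq n.+1 (p ++ q)) =
  p ++ ((q ++ p) ++ flatten (nseq n (q ++ p))) ++ q).
by rewrite IH !catA.
Qed.

End Gen.

Section Rep.
Variables (T : finType) (e : rel T).

Lemma rep_ext (w s : seq T) : represents e w ->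
  (forall x y, x != y -> alternate w x y -> alternate (w ++ s) x y) ->
  represents e (w ++ s).
Proof.
case/andP=> /forallP all_in /forallP H ext.
apply/andP; split; first by apply/forallP => x; rewrite mem_cat all_in.
apply/forallP => x; apply/forallP => y; apply/implyP => nxy.
have := implyP (forallP (H x) y) nxy => /eqP ->.
apply/eqP; apply/idP/idP; first exact: ext.
by rewrite /alternate filter_cat => /sorted_catL.
Qed.

Lemma rep_take (w : seq T) j : represents e w -> represents e (w ++ take j (undup w)).
Proof.
move=> Rw; apply: rep_ext => // x y nxy.
rewrite /alternate filter_cat.
set P := (fun z => (z == x) || (z == y)).
set F := filter P w => sF.
have allin : forall z, z \in w by move: Rw => /andP[/forallP].
have xF : x \in F by rewrite mem_filter /P eqxx allin.
have yF : y \in F by rewrite mem_filter /P eqxx orbT allin.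
have aF : all P F by apply/allP => z; rewrite mem_filter => /andP[].
have [o [uF no]] := undup_two nxy xF yF aF.
have fP : filter P (undup w) = [:: o; last x F] by rewrite filter_undup.
set S := filter P (take j (undup w)).
have : filter P (undup w) = S ++ filter P (drop j (undup w)).
  by rewrite -filter_cat cat_take_drop.
rewrite fP => eS.
have -> : S = take (size S) [:: o; last x F] by rewrite eS take_size_cat.
case: F sF xF {yF aF uF fP eS} no => // h F' sF _ no.
case: (size S) => [|[|k]] /=; rewrite ?take0 ?cats0 //.
  by move: sF no => /= sF no; rewrite cat_path sF /= andbT eq_sym.
move: sF no => /= sF no; rewrite cat_path sF /= andbT eq_sym no /=.
by [].
Qed.

Lemma rep_pow (w : seq T) k : represents e w ->
  represents e (w ++ flatten (nseq k (undup w))) /\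
  undup (w ++ flatten (nseq k (undup w))) = undup w.
Proof.
move=> Rw; elim: k => [|k [IH1 IH2]]; first by rewrite cats0.
rewrite flatten_nseqS catA; split.
  have := rep_take (size (undup w)) IH1; by rewrite IH2 take_size.
rewrite undup_catl; first by rewrite (undup_id (undup_uniq w)).
move=> z.
rewrite mem_cat mem_undup => /orP[//|].
by elim: k {IH1 IH2} => [|k IHk] //=; rewrite mem_cat mem_undup => /orP[//|/IHk].
Qed.

Lemma rep_pow_take (w : seq T) k j : represents e w ->
  represents e (w ++ flatten (nseq k (undup w)) ++ take j (undup w)).
Proof.
move=> Rw; have [R1 R2] := rep_pow k Rw.
by rewrite catA -{2}R2; apply: rep_take.
Qed.

End Rep.


Section Build.
Variables (T U : eqType) (blk : T -> nat -> seq U).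

Fixpoint buildW (R : seq T) (off : T -> nat) : seq (T * U) :=
  if R is x :: R' then map (pair x) (blk x (off x)) ++
     buildW R' (fun y => off y + (y == x)) else [::].

Lemma copyW R off v (Q : pred U) :
  filter (fun z => (z.1 == v) && Q z.2) (buildW R off) =
  map (pair v) (filter Q (flatten [seq blk v k | k <- iota (off v) (count_mem v R)])).
Proof.
elim: R off => [|x R IH] off //=.
rewrite filter_cat IH filter_map.
case: (x =P v) => [<-|ne].
  rewrite eqxx /= addn1 filter_cat map_cat; congr (_ ++ _).
  by congr (map _ _); apply: eq_filter => z /=; rewrite eqxx.
have -> : [seq z <- blk x (off x) | preim (pair x) (fun z => (z.1 == v) && Q z.2) z] = [::].
  rewrite -(filter_pred0 (blk x (off x))); apply: eq_filter => z /=.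
  by move/eqP: ne => /negbTE ->.
have -> : (v == x) = false by apply/eqP => E; apply: ne.
by rewrite addn0.
Qed.

Lemma rootW R off (Pt : pred T) r :
  (forall x k, filter (pred1 r) (blk x k) = [:: r]) ->
  filter (fun z => Pt z.1 && (z.2 == r)) (buildW R off) =
  map (fun x => (x, r)) (filter Pt R).
Proof.
move=> H; elim: R off => [|x R IH] off //=.
rewrite filter_cat IH filter_map.
case E: (Pt x) => /=.
  have -> : [seq z <- blk x (off x) | preim (pair x) (fun z => Pt z.1 && (z.2 == r)) z]
     = [seq z <- blk x (off x) | pred1 r z].
    by apply: eq_filter => z /=; rewrite E.
  by rewrite H.
have -> : [seq z <- blk x (off x) | preim (pair x) (fun z => Pt z.1 && (z.2 == r)) z] = [::].
  by rewrite -(filter_pred0 (blk x (off x))); apply: eq_filter => z /=; rewrite E.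
by [].
Qed.

Lemma splitW R off v k : off v <= k < off v + count_mem v R ->
  exists W1 W2, buildW R off = W1 ++ map (pair v) (blk v k) ++ W2.
Proof.
elim: R off => [|x R IH] off /=.
  by rewrite addn0 => /andP[a b]; move: (leq_ltn_trans a b); rewrite ltnn.
move=> /andP[lo hi].
case: (x =P v) => [E|ne].
  subst x; case: (k =P off v) => [->|nk].
    by exists [::], (buildW R (fun y => off y + (y == v))).
  have H' : off v + (v == v) <= k < off v + (v == v) + count_mem v R.
    rewrite eqxx addn1 ltn_neqAle lo andbT eq_sym; apply/andP; split; first by apply/eqP.
    by move: hi; rewrite eqxx addnA addn1.
  have [W1 [W2 ->]] := IH (fun y => off y + (y == v)) H'.
  by exists (map (pair v) (blk v (off v)) ++ W1), W2; rewrite catA.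
have H' : off v + (v == x) <= k < off v + (v == x) + count_mem v R.
  have -> : (v == x) = false by apply/eqP => E; apply: ne.
  have E2 : (x == v) = false by apply/eqP.
  by rewrite addn0 lo; move: hi; rewrite E2 add0n.
have [W1 [W2 ->]] := IH (fun y => off y + (y == x)) H'.
by exists (map (pair x) (blk x (off x)) ++ W1), W2; rewrite catA.
Qed.

End Build.

Lemma sum_count_fst (A : Type) (T : finType) (f : A -> T) (s : seq A) :
  \sum_(v : T) count (fun z => f z == v) s = size s.
Proof.
elim: s => [|h s IH] /=; first by rewrite big1.
rewrite big_split /= IH (bigD1 (f h)) //= eqxx big1 // => v /negbTE.
by rewrite eq_sym => ->.
Qed.


Section RSplit.
Variables (U : eqType) (r : U).

Fixpoint rsplit (s : seq U) : seq (seq U) * seq U :=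
  match s with
  | [::] => ([::], [::])
  | x :: s' => let p := rsplit s' in
     if x == r then ([::] :: p.1, p.2)
     else match p.1 with
          | [::] => ([::], x :: p.2)
          | S0 :: Ss => ((x :: S0) :: Ss, p.2)
          end
  end.

Lemma rsplitP s :
  [/\ flatten (map (rcons^~ r) (rsplit s).1) ++ (rsplit s).2 = s,
      all (fun S => r \notin S) (rsplit s).1,
      r \notin (rsplit s).2 &
      size (rsplit s).1 = count_mem r s].
Proof.
elim: s => [|x s [IH1 IH2 IH3 IH4]] //=.
case: (rsplit s) IH1 IH2 IH3 IH4 => [ss t] /= IH1 IH2 IH3 IH4.
case: (x =P r) => [->|nx].
  by rewrite /= IH1 IH2 IH3 IH4 add1n.
case: ss IH1 IH2 IH4 => [|S0 Ss] IH1 IH2 IH4 /=.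
  move: IH1 IH4 => /= <- <-; split => //.
  by rewrite inE negb_or; apply/andP; split => //; apply/eqP => E; apply: nx.
move: IH1 IH2 IH4 => /= <- /andP[h1 ->] <-; rewrite -catA andbT; split => //.
by rewrite inE negb_or h1 andbT; apply/eqP => E; apply: nx.
Qed.

End RSplit.

Lemma filter_pred1_nseq (U : eqType) (x : U) s :
  filter (pred1 x) s = nseq (count_mem x s) x.
Proof.
elim: s => //= h s IH; rewrite IH.
by case: (h =P x) => [->|]; rewrite ?eqxx //; move/eqP/negbTE => ->.
Qed.

Lemma filt_r_nil (U : eqType) (r : U) S : r \notin S -> filter (pred1 r) S = [::].
Proof. by move=> nr; rewrite filter_pred1_nseq (count_memPn nr). Qed.


Section Constr.
Variables (T U : finType) (eG : rel T) (eH : rel U) (r : U) (a : seq T) (b : seq U).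
Hypotheses (Ha : represents eG a) (Hb : represents eH b).

Definition segs := (rsplit r b).1.
Definition tl := (rsplit r b).2.
Definition cc := count_mem r b.
Definition tb := undup b.
Definition Yp := undup tl.
Definition Xp := take (index r tb) tb.

Lemma allb u : u \in b.
Proof. by move: Hb => /andP[/forallP]. Qed.

Lemma alla v : v \in a.
Proof. by move: Ha => /andP[/forallP]. Qed.

Lemma cc_pos : 0 < cc.
Proof. by rewrite /cc lt0n; apply/negP => /eqP /count_memPn; rewrite allb. Qed.

Lemma tb_split : tb = Xp ++ r :: Yp.
Proof.
have [H1 H2 H3 H4] := rsplitP r b.
have : segs != [::].
  by rewrite -size_eq0 /segs H4 -/cc -lt0n cc_pos.
have H1' : flatten (map (rcons^~ r) segs) ++ tl = b := H1.
have H3' : r \notin tl := H3.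
rewrite /Xp /Yp /tb.
case/lastP: segs H1' => // s0 sl H1b _.
have Eb : b = (flatten [seq rcons x r | x <- s0] ++ sl) ++ r :: tl.
  by rewrite -{1}H1b map_rcons flatten_rcons -cats1 -!catA.
set t := tl in H3' Eb *.
have E : undup b = [seq x <- undup (flatten [seq rcons x r | x <- s0] ++ sl) | x \notin r :: t] ++ r :: undup t.
  by rewrite {1}Eb undup_cat /= (negbTE H3').
rewrite E take_pivot //.
by rewrite mem_filter inE eqxx.
Qed.

Lemma tb_uniq : uniq tb. Proof. exact: undup_uniq. Qed.

Lemma r_notin_Xp : r \notin Xp.
Proof. by have := tb_uniq; rewrite tb_split cat_uniq /= => /and3P[_ /norP[]]. Qed.

Lemma r_notin_Yp : r \notin Yp.
Proof. by have := tb_uniq; rewrite tb_split cat_uniq /= => /and3P[_ _ /andP[]]. Qed.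

Lemma r_notin_tl : r \notin tl.
Proof. by have [] := rsplitP r b. Qed.

Definition fat := tl ++ Xp ++ r :: Yp ++ Xp.
Definition mid := r :: Yp ++ Xp.
Definition lst := r :: Yp.

Definition blocks (d : nat) :=
  map (rcons^~ r) segs ++ fat :: (if d is d'.+2 then rcons (nseq d' mid) lst else [::]).

Definition Psi (d : nat) := b ++ flatten (nseq d tb) ++ (if d == 1 then Xp else [::]).

Lemma b_split : b = flatten (map (rcons^~ r) segs) ++ tl.
Proof. by have [] := rsplitP r b. Qed.

Lemma flat_blocks d : 0 < d -> flatten (blocks d) = Psi d.
Proof.
move=> hd; rewrite /blocks /Psi b_split flatten_cat -!catA; congr (_ ++ _).
case: d hd => [|[|d']] // _.
  by rewrite /= tb_split /fat cats0 -!catA.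
change (fat ++ flatten (rcons (nseq d' mid) lst) = tl ++ flatten (nseq d'.+2 tb) ++ [::]).
rewrite flatten_rcons tb_split flatten_nseq_swap cats0.
change (flatten (nseq d'.+1 ((r :: Yp) ++ Xp))) with
  (((r :: Yp) ++ Xp) ++ flatten (nseq d' ((r :: Yp) ++ Xp))).
rewrite /fat /mid /lst -!catA; congr (_ ++ _); congr (_ ++ _); rewrite catA; congr (_ ++ _); by rewrite /= -!catA.
Qed.

Lemma size_blocks d : 0 < d -> size (blocks d) = cc + d.
Proof.
have [_ _ _ H4] := rsplitP r b.
rewrite /blocks size_cat size_map -/segs H4 -/cc.
case: d => [|[|d']] //= _.
by rewrite size_rcons size_nseq.
Qed.

Lemma blocks_root d k : filter (pred1 r) (nth [:: r] (blocks d) k) = [:: r].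
Proof.
have key : all (fun B => filter (pred1 r) B == [:: r]) (blocks d).
  have [_ H2 _ _] := rsplitP r b.
  rewrite /blocks all_cat; apply/andP; split.
    rewrite all_map; apply/allP => S /(allP H2) /= nS.
    by rewrite filter_rcons /= eqxx (filt_r_nil nS).
  rewrite /= /fat !filter_cat /= eqxx !filt_r_nil ?r_notin_tl ?r_notin_Xp ?r_notin_Yp //=.
  case: d => [|[|d']]; rewrite /= ?eqxx //=.
  rewrite all_rcons /= eqxx filt_r_nil ?r_notin_Yp //= eqxx /=.
  apply/allP => B; rewrite mem_nseq => /andP[_ /eqP ->] /=.
  by rewrite eqxx filter_cat !filt_r_nil ?r_notin_Yp ?r_notin_Xp.
  by rewrite mem_cat negb_or r_notin_Yp r_notin_Xp.
case: (ltnP k (size (blocks d))) => hk.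
  by apply/eqP; apply: (allP key); rewrite mem_nth.
by rewrite nth_default //= eqxx.
Qed.

Lemma fat_two u : u != r -> 2 <= count_mem u fat.
Proof.
move=> nu.
have : u \in tb by rewrite mem_undup allb.
rewrite tb_split mem_cat inE (negbTE nu) /=.
have hr : (r == u) = false by rewrite eq_sym (negbTE nu).
rewrite /fat !count_cat /= hr add0n.
have pos : forall s : seq U, u \in s -> 0 < count_mem u s.
  by move=> s us; rewrite lt0n; apply/negP => /eqP /count_memPn; rewrite us.
case/orP => hu.
  by have h1 := pos _ hu; move: h1; rewrite count_cat; move: (count_mem u Xp) (count_mem u tl) (count_mem u Yp) => x y z; lia.
have h1 := pos _ hu.
have h2 : 0 < count_mem u tl by apply: pos; rewrite -(mem_undup tl).
by move: h1 h2; rewrite count_cat; move: (count_mem u Xp) (count_mem u tl) (count_mem u Yp) => x y z; lia.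
Qed.


Lemma count_flatten_nseq (p : pred T) k (s : seq T) :
  count p (flatten (nseq k s)) = k * count p s.
Proof. by elim: k => //= k IH; rewrite count_cat IH mulSn. Qed.

Definition Rw := a ++ flatten (nseq cc (undup a)).

Lemma count_R v : count_mem v Rw = count_mem v a + cc.
Proof.
by rewrite /Rw count_cat count_flatten_nseq (count_uniq_mem v (undup_uniq a)) mem_undup alla muln1.
Qed.

Lemma Psi_rep d : represents eH (Psi d).
Proof.
rewrite /Psi.
have -> : (if d == 1 then Xp else [::]) = take (if d == 1 then size Xp else 0) tb.
  by case: (d == 1); [rewrite tb_split take_size_cat | rewrite take0].
exact: rep_pow_take.
Qed.

Lemma R_rep : represents eG Rw.
Proof. by have := rep_pow_take cc 0 Ha; rewrite take0 cats0. Qed.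

Definition blk (v : T) k := nth [:: r] (blocks (count_mem v a)) k.
Definition Wd := buildW blk Rw (fun _ => 0).

Lemma dpos v : 0 < count_mem v a.
Proof. by rewrite lt0n; apply/negP => /eqP /count_memPn; rewrite alla. Qed.

Lemma copy v (Q : pred U) :
  filter (fun z => (z.1 == v) && Q z.2) Wd = map (pair v) (filter Q (Psi (count_mem v a))).
Proof.
rewrite /Wd copyW count_R addnC -(size_blocks (dpos v)).
have -> : [seq blk v k | k <- iota 0 (size (blocks (count_mem v a)))] = blocks (count_mem v a).
  exact: (mkseq_nth [:: r] (blocks (count_mem v a))).
by rewrite flat_blocks ?dpos.
Qed.

Lemma roots (v v' : T) :
  filter (fun z => ((z.1 == v) || (z.1 == v')) && (z.2 == r)) Wd =
  map (fun x => (x, r)) (filter (fun x => (x == v) || (x == v')) Rw).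
Proof. by rewrite /Wd (@rootW _ _ blk Rw (fun _ => 0) (fun x => (x == v) || (x == v')) r) // => x k; exact: blocks_root. Qed.

Lemma blk_fat v : blk v cc = fat.
Proof.
have [_ _ _ H4] := rsplitP r b.
by rewrite /blk /blocks nth_cat size_map -/segs H4 -/cc ltnn subnn.
Qed.

Lemma cross v u (q : T * U) : u != r -> q.1 != v -> alternate Wd (v, u) q = false.
Proof.
move=> nu nq.
have hk : 0 <= cc < 0 + count_mem v Rw by rewrite count_R add0n /= -{1}(add0n cc) ltn_add2r dpos.
have [W1 [W2 E]] := @splitW _ _ blk Rw (fun _ => 0) v cc hk.
rewrite /alternate /Wd E !filter_cat blk_fat filter_map.
have -> : [seq x <- fat | preim (pair v) (fun z => (z == (v, u)) || (z == q)) x] =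
          filter (pred1 u) fat.
  apply: eq_filter => z /=; rewrite xpair_eqE eqxx /=.
  case: (z =P u) => //= _; apply/negP => /eqP E2; rewrite -E2 /= eqxx in nq.
  by [].
rewrite filter_pred1_nseq.
have := fat_two nu; case: (count_mem u fat) => [|[|n]] // _.
by rewrite /= sorted_dup.
Qed.


Lemma sorted_map_inj (A B : eqType) (f : A -> B) (s : seq A) : injective f ->
  sorted (fun x y => x != y) (map f s) = sorted (fun x y => x != y) s.
Proof.
move=> fi; rewrite sorted_map; case: s => //= x s.
by apply: eq_path => y z /=; rewrite inj_eq.
Qed.

Lemma W_rep : irreflexive eG -> represents (rooted_product eG eH r) Wd.
Proof.
move=> irrG; apply/andP; split.
  apply/forallP => -[v u].
  have E := copy v (pred1 u).
  have : (v, u) \in map (pair v) (filter (pred1 u) (Psi (count_mem v a))).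
    by rewrite map_f // mem_filter /= eqxx /Psi mem_cat allb.
  by rewrite -E mem_filter => /andP[_ ->].
have pinj : forall v : T, injective (@pair T U v) by move=> v x y [].
apply/forallP => -[v u]; apply/forallP => -[v' u']; apply/implyP => npq.
rewrite /rooted_product /=.
case: (v =P v') => [E|nv].
  subst v'; rewrite irrG /= !andbF orbF.
  have nu : u != u' by apply: contra npq => /eqP ->.
  have -> : alternate Wd (v, u) (v, u') = alternate (Psi (count_mem v a)) u u'.
    rewrite /alternate.
    have -> : [seq z <- Wd | (z == (v, u)) || (z == (v, u'))] =
              [seq z <- Wd | (z.1 == v) && ((fun y => (y == u) || (y == u')) z.2)].
      by apply: eq_filter => -[x y] /=; rewrite !xpair_eqE -andb_orr.
    by rewrite (copy v (fun y => (y == u) || (y == u'))) sorted_map_inj.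
  have := Psi_rep (count_mem v a) => /andP[_ /forallP H].
  exact: (implyP (forallP (H u) u') nu).
rewrite /=.
case: (u =P r) => [->|nu]; last first.
  by rewrite cross //=; apply/eqP => E; apply: nv.
case: (u' =P r) => [->|nu']; last first.
  by rewrite alt_sym cross //=; apply/eqP.
have -> : alternate Wd (v, r) (v', r) = alternate Rw v v'.
  rewrite /alternate.
  have -> : [seq z <- Wd | (z == (v, r)) || (z == (v', r))] =
            [seq z <- Wd | ((z.1 == v) || (z.1 == v')) && (z.2 == r)].
    by apply: eq_filter => -[x y] /=; rewrite !xpair_eqE -andb_orl.
  rewrite roots sorted_map_inj //.
  by move=> x y [].
have := R_rep => /andP[_ /forallP H].
by rewrite /=; apply: (implyP (forallP (H v) v')); apply/eqP.
Qed.

Lemma W_size : size Wd = \sum_(v : T) size (Psi (count_mem v a)).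
Proof.
rewrite -(sum_count_fst fst Wd); apply: eq_bigr => v _.
rewrite -size_filter.
have -> : [seq z <- Wd | z.1 == v] = [seq z <- Wd | (z.1 == v) && predT z.2].
  by apply: eq_filter => z; rewrite andbT.
by rewrite copy size_map filter_predT.
Qed.

Lemma size_tb : size tb = #|U|.
Proof.
rewrite cardE; apply: perm_size; apply: uniq_perm; rewrite ?undup_uniq ?enum_uniq //.
by move=> u; rewrite mem_undup allb mem_enum.
Qed.

Lemma size_Xp : size Xp <= #|U|.-1.
Proof. by rewrite -size_tb tb_split size_cat /= addnS /= leq_addr. Qed.

Lemma size_flatten_nseq (A : Type) d (s : seq A) : size (flatten (nseq d s)) = d * size s.
Proof. by elim: d => //= d IH; rewrite size_cat IH mulSn. Qed.

Lemma size_Psi d : size (Psi d) = size b + d * #|U| + (d == 1) * size Xp.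
Proof.
rewrite /Psi !size_cat size_flatten_nseq size_tb addnA.
by case: (d == 1); rewrite ?mul1n ?mul0n.
Qed.

Lemma K_clique : is_clique eG [set v | count_mem v a == 1].
Proof.
apply/forallP => x; apply/implyP; rewrite inE => /eqP cx.
apply/forallP => y; apply/implyP; rewrite inE => /eqP cy.
apply/implyP => nxy.
move: Ha => /andP[/forallP ain /forallP H].
have := implyP (forallP (H x) y) nxy => /eqP ->.
rewrite /alternate.
set F := filter _ a.
have sF : size F = 2.
  rewrite size_filter.
  have := count_predUI (pred1 x) (pred1 y) a.
  rewrite (eq_count (a1 := predI (pred1 x) (pred1 y)) (a2 := pred0)); last first.
    by move=> z /=; apply/negP => /andP[/eqP -> /eqP E]; rewrite E eqxx in nxy.
  rewrite count_pred0 addn0 cx cy => E; rewrite -[2]/(1 + 1) -E.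
  by apply: eq_count => z.
have xF : x \in F by rewrite mem_filter eqxx ain.
have yF : y \in F by rewrite mem_filter eqxx orbT ain.
case: F sF xF yF => [|z1 [|z2 [|]]] //= _ xF yF.
rewrite andbT; apply/negP => /eqP E; subst z2.
move: xF yF; rewrite !inE !orbb => /eqP E1 /eqP E2.
by rewrite E1 E2 eqxx in nxy.
Qed.

End Constr.

Lemma wr_spec (T : finType) (e : rel T) : word_representable e ->
  (exists w, represents e w /\ size w = wr_length e) /\
  (forall w, represents e w -> wr_length e <= size w).
Proof.
move=> [w0 Hw0]; rewrite /wr_length.
case: excluded_middle_informative => [H|H]; last first.
  by exfalso; apply: H; exists (size w0); apply/existsP; exists (in_tuple w0).
case: (ex_minnP H) => n Hn Hmin; split.
  by move/existsP: Hn => [t Ht]; exists t; rewrite size_tuple.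
by move=> w Hw; apply: Hmin; apply/existsP; exists (in_tuple w).
Qed.


Theorem mainTheorem11 (T U : finType) (eG : rel T) (eH : rel U) (r : U) :
  simple_graph eG -> simple_graph eH ->
  word_representable eG -> word_representable eH ->
  word_representable (rooted_product eG eH r) /\
  wr_length (rooted_product eG eH r) <=
    #|U| * wr_length eG + #|T| * wr_length eH + (#|U| - 1) * clique_number eG.
Proof.
move=> [symG irrG] [symH irrH] wrG wrH.
have [[a [Ha sa]] _] := wr_spec wrG.
have [[b [Hb sb]] _] := wr_spec wrH.
have HW := W_rep r Ha Hb irrG.
split; first by exists (Wd r a b).
have [_ Hmin] := wr_spec (ex_intro (fun w => represents (rooted_product eG eH r) w) _ HW).
apply: leq_trans (Hmin _ HW) _.
rewrite (W_size r Ha Hb) -sa -sb.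
under eq_bigr => v _ do rewrite (size_Psi r Hb).
rewrite !big_split /=.
have -> : \sum_(v : T) size b = #|T| * size b.
  by rewrite big_const iter_addn_0 mulnC.
have -> : \sum_(v : T) count_mem v a * #|U| = #|U| * size a.
  rewrite -big_distrl /= mulnC; congr (_ * _).
  exact: (sum_count_fst id a).
have -> : \sum_(v : T) (count_mem v a == 1) * size (Xp r b) =
          #|[set v | count_mem v a == 1]| * size (Xp r b).
  rewrite -big_distrl /=; congr (_ * _).
  rewrite -sum1_card [RHS]big_mkcond /=; apply: eq_bigr => v _.
  by rewrite inE; case: (_ == 1).
rewrite [#|U| * _ + _]addnC leq_add2l mulnC.
apply: leq_mul.
  by rewrite subn1; exact: (size_Xp r Hb).
rewrite /clique_number; apply: (@leq_bigmax_cond _ (fun A => is_clique eG A) (fun A : {set T} => #|A|)); exact: K_clique Ha.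
Qed.
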